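(* Let $\mathcal{X}$ be a nonempty closed domain set whose closed convex hull $\operatorname{clconv}(\mathcal{X})$ contains no line, and let $0\le\tilde m\le m$ be integers. Suppose that $F+\widehat F\subseteq\mathcal{X}$ for every face $F$ of $\operatorname{clconv}(\mathcal{X})$ of dimension at most $\tilde m$ and every face $\widehat F$ of the recession cone $\operatorname{rec}(\operatorname{clconv}(\mathcal{X}))$ of dimension at most $\tilde m+1$. Then for every matrix $A_0$ and every system of $m$ LMIs of dimension $\tilde m$, $\mathbf{V}_{\mathrm{opt}}=\mathbf{V}_{\mathrm{rel}}$.
   Context: Let $\mathcal{Q}$ be one of $\mathbb{S}^n_+$, $\mathbb{S}^n$ or $\mathbb{R}^{n\times p}$, where $k\le n\le p$ are positive integers, with trace inner product $\langle A,X\rangle=\operatorname{tr}(A^\top X)$. A domain set is a set $\mathcal{X}=\{X\in\mathcal{Q}:\operatorname{rank}(X)\le k,\ F_j(X)\le0\ \forall j\in[t]\}$ with each $F_j:\mathcal{Q}\to\mathbb{R}$ continuous. A system of $m$ LMIs consists of matrices $A_1,\dots,A_m$ (same size as elements of $\mathcal{Q}$, possibly non-symmetric) and bounds $-\infty\le b_i^l\le b_i^u\le+\infty$; its dimension is $\dim\operatorname{span}\{A_1,\dots,A_m\}$. Set $\mathcal{C}=\{X\in\mathcal{X}: b_i^l\le\langle A_i,X\rangle\le b_i^u\ \forall i\}$, $\mathcal{C}_{\mathrm{rel}}=\{X\in\operatorname{clconv}(\mathcal{X}): b_i^l\le\langle A_i,X\rangle\le b_i^u\ \forall i\}$, and for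 an objective matrix $A_0$, $\mathbf{V}_{\mathrm{opt}}=\inf_{X\in\mathcal{C}}\langle A_0,X\rangle$ (the rank-constrained problem) and $\mathbf{V}_{\mathrm{rel}}=\inf_{X\in\mathcal{C}_{\mathrm{rel}}}\langle A_0,X\rangle$ (its Dantzig–Wolfe relaxation). A face of a closed convex set $D$ is a convex $F\subseteq D$ such that any segment $[a,b]\subseteq D$ whose open part meets $F$ lies in $F$; its dimension is that of its affine hull. $\operatorname{rec}(D)=\{d: x+td\in D\ \forall x\in D,\ t\ge0\}$. *)

(* Defs.v *)
From HB Require Import structures.
From mathcomp Require Import all_boot all_order all_algebra.
From mathcomp Require Import all_classical all_reals all_analysis.
Set Implicit Arguments. Unset Strict Implicit. Unset Printing Implicit Defensive.
Import Order.TTheory GRing.Theory Num.Theory.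
Import numFieldNormedType.Exports numFieldTopology.Exports.
Local Open Scope classical_set_scope.
Local Open Scope ring_scope.

(* The three possible ambient spaces Q. Elements are stored as n x p matrices;
   for S^n and S^n_+ the matrix must be square (p = n). *)
Inductive qkind := QPSD | QSym | QRect.

Section Defs.
Variable R : realType.

Definition sq_of (n p : nat) (e : p = n) (X : 'M[R]_(n, p)) : 'M[R]_n :=
  castmx (erefl n, e) X.

Definition Qset (kd : qkind) (n p : nat) : set 'M[R]_(n, p) :=
  match kd with
  | QRect => setT
  | QSym => [set X | exists e : p = n, (sq_of e X)^T = sq_of e X]
  | QPSD => [set X | exists e : p = n, (sq_of e X)^T = sq_of e X /\
                 forall v : 'rV[R]_n, 0 <= (v *m sq_of e X *m v^T) 0 0]
  end.

Definition mxip (n p : nat) (A X : 'M[R]_(n, p)) : R := \tr (A^T *m X).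

Definition domain_set (kd : qkind) (n p k t : nat)
  (F : 'I_t -> 'M[R]_(n, p) -> R) : set 'M[R]_(n, p) :=
  [set X | @Qset kd n p X /\ (\rank X <= k)%N /\ forall j, F j X <= 0].

Section Convex.
Variable (V : lmodType R).

Definition conv_hull (S : set V) : set V :=
  [set x | exists (q : nat) (w : 'I_q -> R) (y : 'I_q -> V),
     (forall i, 0 <= w i) /\ \sum_(i < q) w i = 1 /\ (forall i, S (y i)) /\
     x = \sum_(i < q) w i *: y i].

Definition no_line (D : set V) : Prop :=
  ~ exists (x d : V), d != 0 /\ forall t : R, D (x + t *: d).

Definition rec_cone (D : set V) : set V :=
  [set d | forall x, D x -> forall t : R, 0 <= t -> D (x + t *: d)].

Definition is_face (D F : set V) : Prop :=
  F `<=` D /\ convex_set F /\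
  forall a b, D a -> D b ->
    (exists l : R, 0 < l < 1 /\ F ((1 - l) *: a + l *: b)) ->
    forall l : R, 0 <= l <= 1 -> F ((1 - l) *: a + l *: b).

Definition mink_sum (A B : set V) : set V := [set x + y | x in A & y in B].
End Convex.

Section Dim.
Variable (V : vectType R).

(* dimension of the affine hull of S: the least d such that the direction
   space span{x - y : x, y in S} is spanned by d vectors (0 for S empty) *)
Definition spans_dir (S : set V) (d : nat) : bool :=
  `[< exists s : seq V, size s = d /\
        forall x y, S x -> S y -> (x - y) \in (span s)%VS >].

Lemma spans_dir_ex (S : set V) : exists d, spans_dir S d.
Proof.
exists (size (vbasis (fullv : {vspace V}))); apply/asboolP.
exists (vbasis fullv); split => // x y _ _.
by rewrite (span_basis (vbasisP fullv)) memvf.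
Qed.

Definition aff_dim (S : set V) : nat := ex_minn (spans_dir_ex S).
End Dim.

Definition clconv (n p : nat) (S : set 'M[R]_(n, p)) : set 'M[R]_(n, p) :=
  closure (conv_hull S : set 'M[R]_(n, p)).

Definition lmi_dim (n p m : nat) (A : 'I_m -> 'M[R]_(n, p)) : nat :=
  \dim (span [seq A i | i <- enum 'I_m])%VS.

Definition lmi_feas (n p m : nat) (Y : set 'M[R]_(n, p))
  (A : 'I_m -> 'M[R]_(n, p)) (bl bu : 'I_m -> \bar R) : set 'M[R]_(n, p) :=
  [set X | Y X /\ forall i, (bl i <= (mxip (A i) X)%:E <= bu i)%E].

Definition lin_inf (n p : nat) (A0 : 'M[R]_(n, p)) (C : set 'M[R]_(n, p)) : \bar R :=
  ereal_inf [set (mxip A0 X)%:E | X in C].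

End Defs.
Arguments Qset {R} kd n p.

(* Main.v *)
Require Import Defs.
From HB Require Import structures.
From mathcomp Require Import all_boot all_order all_algebra.
From mathcomp Require Import all_classical all_reals all_analysis.
From mathcomp Require Import ring lra zify.
Import Order.TTheory GRing.Theory Num.Theory.
Import numFieldNormedType.Exports numFieldTopology.Exports.
Local Open Scope classical_set_scope.
Local Open Scope ring_scope.

Set Implicit Arguments. Unset Strict Implicit. Unset Printing Implicit Defensive.
Section Main.
Variable R : realType.
Variables n p : nat.
Local Notation V := 'M[R]_(n, p).

Lemma mxipC (A X : V) : mxip A X = mxip X A.
Proof. by rewrite /mxip -mxtrace_tr trmx_mul trmxK. Qed.

Lemma mxipDr (B X Y : V) : mxip B (X + Y) = mxip B X + mxip B Y.
Proof. by rewrite /mxip mulmxDr mxtraceD. Qed.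

Lemma mxipZr (B X : V) a : mxip B (a *: X) = a * mxip B X.
Proof. by rewrite /mxip -scalemxAr mxtraceZ. Qed.

Definition ipf (B : V) : V -> R^o := fun Z => mxip B Z.
Lemma ipf_lin B : linear (ipf B).
Proof. by move=> a x y; rewrite /ipf mxipDr mxipZr. Qed.
HB.instance Definition _ B := GRing.isLinear.Build R V R^o *:%R (ipf B) (ipf_lin B).

Lemma mxipNr (B X : V) : mxip B (- X) = - mxip B X.
Proof. exact: (raddfN (ipf B)). Qed.
Lemma mxipBr (B X Y : V) : mxip B (X - Y) = mxip B X - mxip B Y.
Proof. exact: (raddfB (ipf B)). Qed.
Lemma mxip0r (B : V) : mxip B 0 = 0.
Proof. exact: (raddf0 (ipf B)). Qed.
Lemma mxip0l (B : V) : mxip 0 B = 0.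
Proof. by rewrite mxipC mxip0r. Qed.

Definition Wp (s : seq V) (Z : V) := forall B, B \in s -> mxip B Z = 0.

Lemma Wp_span (s : seq V) Z A : Wp s Z -> A \in (span s)%VS -> mxip A Z = 0.
Proof.
move=> hW hA.
have := coord_span (X := in_tuple s) hA => ->.
rewrite mxipC.
have -> : mxip Z (\sum_i coord (in_tuple s) i A *: (in_tuple s)`_i) =
  ipf Z (\sum_i coord (in_tuple s) i A *: (in_tuple s)`_i) by [].
rewrite linear_sum big1 // => i _.
rewrite linearZ /= /ipf mxipC hW ?mulr0 ?scaler0 //=.
by apply: mem_nth.
Qed.

Lemma kernel_ex (s : seq V) (U : {vspace V}) :
  (size s < \dim U)%N -> exists Z, Z \in U /\ Z != 0 /\ Wp s Z.
Proof.
elim: s U => [|B s IH] U /= hs.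
  exists (vpick U); split; first exact: memv_pick.
  split; last by move=> B.
  by rewrite vpick0 -dimv_eq0 -lt0n.
pose f := linfun (ipf B).
have hd := limg_ker_dim f U.
have hle : (\dim (f @: U) <= 1)%N.
  by apply: leq_trans (dimvS (subvf _)) _; rewrite dimvf /dim /=.
have : (size s < \dim (U :&: lker f))%N.
  move: hd hle hs; set a := \dim (U :&: lker f); set b := \dim (f @: U).
  set c := \dim U; move=> hd hle hs. lia.
move=> /IH [Z [hZ [nZ hWZ]]].
move: hZ; rewrite memv_cap => /andP [hZU hZk].
exists Z; split => //; split => // B'; rewrite inE => /orP [/eqP ->|hB'].
  by move: hZk; rewrite memv_ker lfunE /= => /eqP.
exact: hWZ.
Qed.


Definition cvx (D : set V) := forall (x y : V) (l : R), D x -> D y -> 0 <= l <= 1 ->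
  D ((1 - l) *: x + l *: y).

Ltac mxring := apply/matrixP => ? ?; rewrite !mxE; ring.

Lemma comb2 (D : set V) (Y u v : V) (l : R) : cvx D -> D (Y + u) -> D (Y + v) -> 0 <= l <= 1 ->
  D (Y + ((1 - l) *: u + l *: v)).
Proof.
move=> cD hu hv hl; have := cD _ _ _ hu hv hl.
have -> : (1 - l) *: (Y + u) + l *: (Y + v) = Y + ((1 - l) *: u + l *: v).
  by apply/matrixP => i j; rewrite !mxE; ring.
by [].
Qed.

Lemma seg (D : set V) (Y U : V) (a a' : R) : cvx D -> D Y -> D (Y + a *: U) -> 0 <= a' <= a ->
  D (Y + a' *: U).
Proof.
move=> cD hY hU /andP [h0 h1].
have [a0|a0] := eqVneq a 0.
  have -> : a' = 0 by apply/eqP; rewrite eq_le h0 -a0 h1.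
  by rewrite scale0r addr0.
have hY' : D (Y + 0) by rewrite addr0.
have hl : 0 <= a' / a <= 1.
  have ap : 0 < a by rewrite lt_neqAle eq_sym a0 (le_trans h0 h1).
  by rewrite divr_ge0 ?ler_pdivrMr ?mul1r //= ltW.
have := comb2 cD hY' hU hl.
have -> : (1 - a' / a) *: 0 + a' / a *: (a *: U) = a' *: U => //.
by rewrite scaler0 add0r scalerA divfK.
Qed.

Lemma combP (D : set V) (Y c : V) (d : R) (w : V) : cvx D -> D c -> D (Y + d *: (Y - c)) -> 0 <= d ->
  D (c + w) -> D (Y + (d / (1 + d)) *: w).
Proof.
move=> cD hc hc' d0 hw.
have d1 : 1 + d != 0 by rewrite gt_eqF // ltr_pwDl.
have hl : 0 <= 1 / (1 + d) <= 1.
  by rewrite divr_ge0 ?ler_pdivrMr ?mul1r ?lerDl //= ?ltr_pwDl // addr_ge0.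
have := cD _ _ _ hw hc' hl.
suff -> : (1 - 1 / (1 + d)) *: (c + w) + 1 / (1 + d) *: (Y + d *: (Y - c)) =
  Y + d / (1 + d) *: w by [].
apply/matrixP => ? ?; rewrite !mxE; field; exact: d1.
Qed.

Definition Lset (D : set V) (Y : V) (U : V) :=
  exists2 e : R, 0 < e & D (Y + e *: U) /\ D (Y - e *: U).

Lemma Lset0 (D : set V) (Y : V) : D Y -> Lset D Y 0.
Proof. by move=> hY; exists 1 => //; rewrite scaler0 addr0 subr0. Qed.

Lemma LsetZ (D : set V) (Y : V) (k : R) (U : V) : D Y -> Lset D Y U -> Lset D Y (k *: U).
Proof.
move=> hY [e e0 [h1 h2]].
have [k0|kn0] := eqVneq k 0; first by rewrite k0 scale0r; exact: Lset0.
have ka : 0 < `|k| by rewrite normr_gt0.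
exists (e / `|k|); first by rewrite divr_gt0.
have [kp|kn] := ltP 0 k.
  have -> : e / `|k| *: (k *: U) = e *: U.
    by rewrite scalerA gtr0_norm // divfK // gt_eqF.
  by [].
have kl : k < 0 by rewrite lt_neqAle kn kn0.
have -> : e / `|k| *: (k *: U) = - (e *: U).
  rewrite scalerA ltr0_norm // invrN mulrN mulNr divfK ?lt_eqF //.
  by rewrite scaleNr.
by rewrite opprK; split.
Qed.

Lemma LsetD (D : set V) (Y U1 U2 : V) : cvx D -> D Y -> Lset D Y U1 -> Lset D Y U2 ->
  Lset D Y (U1 + U2).
Proof.
move=> cD hY [e1 e10 [a1 b1]] [e2 e20 [a2 b2]].
pose e := Num.min e1 e2 / 2.
have e0 : 0 < e by rewrite divr_gt0 // lt_min e10.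
have e2e : 2 * e = Num.min e1 e2 by rewrite /e mulrC divfK.
have he1 : 0 <= 2 * e <= e1.
  by rewrite e2e le_min (ltW e10) (ltW e20) /= ge_min lexx.
have he2 : 0 <= 2 * e <= e2.
  by rewrite e2e le_min (ltW e10) (ltW e20) /= ge_min lexx orbT.
have hl : 0 <= (1 / 2 : R) <= 1 by rewrite divr_ge0 // ler_pdivrMr // mul1r ler1n.
exists e => //; split.
  have := comb2 cD (seg cD hY a1 he1) (seg cD hY a2 he2) hl.
  suff -> : (1 - 1 / 2) *: (2 * e *: U1) + 1 / 2 *: (2 * e *: U2) = e *: (U1 + U2) by [].
  by apply/matrixP => ? ?; rewrite !mxE; field.
have b1' : D (Y + e1 *: (- U1)) by rewrite scalerN.
have b2' : D (Y + e2 *: (- U2)) by rewrite scalerN.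
have := comb2 cD (seg cD hY b1' he1) (seg cD hY b2' he2) hl.
suff -> : (1 - 1 / 2) *: (2 * e *: - U1) + 1 / 2 *: (2 * e *: - U2) = - (e *: (U1 + U2)) by [].
by apply/matrixP => ? ?; rewrite !mxE; field.
Qed.

Lemma subspace_vspace (S : set V) : S 0 -> (forall u v, S u -> S v -> S (u + v)) ->
  (forall k u, S u -> S (k *: u)) -> exists U : {vspace V}, forall u, u \in U <-> S u.
Proof.
move=> S0 SD SZ.
pose P d := `[< exists U : {vspace V}, \dim U = d /\ forall u, u \in U -> S u >].
have exP : exists d, P d.
  exists 0%N; apply/asboolP; exists 0%VS; split; first by rewrite dimv0.
  by move=> u; rewrite memv0 => /eqP ->.
have ubP : forall d, P d -> (d <= \dim (fullv : {vspace V}))%N.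
  by move=> d /asboolP [U [<- _]]; apply: dimvS; apply: subvf.
case: (ex_maxnP exP ubP) => m /asboolP [U [hm hU]] hmax.
exists U => u; split; first exact: hU.
move=> Su; apply: contrapT => nu.
pose U2 := (U + <[u]>)%VS.
have hU2 : forall w, w \in U2 -> S w.
  move=> w /memv_addP [x hx [y /vlineP [k ->] ->]].
  by apply: SD; [exact: hU | exact: SZ].
have hlt : (\dim U < \dim U2)%N.
  rewrite ltnNge; apply/negP => hle.
  have : U == U2 by rewrite eqEdim addvSl hle.
  move=> /eqP hE; apply: nu; rewrite hE.
  by apply: (subvP (addvSr U <[u]>)); exact: memv_line.
have : P (\dim U2) by apply/asboolP; exists U2.
by move=> /hmax; rewrite -hm leqNgt hlt.
Qed.

Lemma Lset_vspace (D : set V) (Y : V) : cvx D -> D Y ->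
  exists U : {vspace V}, forall u, u \in U <-> Lset D Y u.
Proof.
move=> cD hY; apply: subspace_vspace.
- exact: Lset0.
- by move=> u v; apply: LsetD.
- by move=> k u; apply: LsetZ.
Qed.


Ltac vec := apply/matrixP => ? ?; rewrite !mxE; ring.

Definition Fset (D : set V) (Y : V) (Uv : {vspace V}) : set V :=
  [set a | D a /\ (a - Y) \in Uv].

Lemma Fcomb (D : set V) (Y : V) (Uv : {vspace V}) a b (l : R) : cvx D ->
  Fset D Y Uv a -> Fset D Y Uv b -> 0 <= l <= 1 -> Fset D Y Uv ((1 - l) *: a + l *: b).
Proof.
move=> cD [Da ha] [Db hb] hl; split; first exact: cD.
have -> : (1 - l) *: a + l *: b - Y = (1 - l) *: (a - Y) + l *: (b - Y) by vec.
by rewrite memvD // memvZ.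
Qed.

Lemma face_lemma (D : set V) (Y : V) (Uv : {vspace V}) : cvx D -> D Y ->
  (forall u, u \in Uv <-> Lset D Y u) ->
  is_face D (Fset D Y Uv) /\ (aff_dim (Fset D Y Uv) <= \dim Uv)%N.
Proof.
move=> cD hY hU; split; last first.
  rewrite /aff_dim; case: ex_minnP => m _ hmin; apply: hmin.
  apply/asboolP; exists (vbasis Uv : seq V); split; first by rewrite size_tuple.
  move=> x y [_ hx] [_ hy]; rewrite (span_basis (vbasisP Uv)).
  have -> : x - y = (x - Y) - (y - Y) by vec.
  exact: memvB.
split; first by move=> a [].
split.
  move=> x y lam; rewrite !in_setE => hx hy.
  have -> : conv lam x y = (1 - lam%:num) *: (y : V) + lam%:num *: (x : V).
    by rewrite [RHS]addrC.
  by apply: (Fcomb cD hy hx); rewrite ge0 le1.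
move=> a b Da Db [l [/andP [l0 l1] [Dc hc]]] l' hl'.
set c := (1 - l) *: a + l *: b in Dc hc.
have [e e0 [h1 h2]] := (hU _).1 hc.
have h2' : D (Y + e *: (Y - c)).
  have -> : Y + e *: (Y - c) = Y - e *: (c - Y). rewrite /c. vec.
  by [].
set th := e / (1 + e).
have th0 : 0 < th by rewrite divr_gt0 // addr_gt0.
have ha' : D (Y + th *: (a - c)).
  by apply: (combP cD Dc h2' (ltW e0)); rewrite addrC subrK.
have hb' : D (Y + th *: (b - c)).
  by apply: (combP cD Dc h2' (ltW e0)); rewrite addrC subrK.
pose u := b - a.
have hu1 : D (Y + (th * (1 - l)) *: u).
  by have <- : th *: (b - c) = (th * (1 - l)) *: u by rewrite /c /u; vec.
have hu2 : D (Y + (th * l) *: (- u)).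
  by have <- : th *: (a - c) = (th * l) *: (- u) by rewrite /c /u; vec.
have hl1 : 0 < 1 - l by rewrite subr_gt0.
pose e' := th * Num.min l (1 - l).
have e'0 : 0 < e' by rewrite mulr_gt0 // lt_min l0.
have hLu : Lset D Y u.
  exists e' => //; split.
    apply: (seg cD hY hu1); rewrite (ltW e'0) /= ler_pM2l //.
    by rewrite ge_min lexx orbT.
  rewrite -scalerN; apply: (seg cD hY hu2); rewrite (ltW e'0) /= ler_pM2l //.
  by rewrite ge_min lexx.
have hu : u \in Uv by apply/hU.
have Fa : Fset D Y Uv a.
  split => //; have -> : a - Y = (c - Y) - l *: u by rewrite /c /u; vec.
  by rewrite memvB // memvZ.
have Fb : Fset D Y Uv b.
  split => //; have -> : b - Y = (c - Y) + (1 - l) *: u by rewrite /c /u; vec.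
  by rewrite memvD // memvZ.
exact: Fcomb.
Qed.


Lemma closure_normP (A : set V) (z : V) : closure A z ->
  forall e : R, 0 < e -> exists y, A y /\ `|z - y| < e.
Proof.
move=> hz e e0; have [y [Ay By]] := hz _ (nbhsx_ballx z _ e0).
by exists y; split => //; move: By; rewrite -ball_normE.
Qed.

Lemma normP_closure (A : set V) (z : V) :
  (forall e : R, 0 < e -> exists y, A y /\ `|z - y| < e) -> closure A z.
Proof.
move=> H B /nbhs_ballP [e /= e0 hB].
have [y [Ay hy]] := H e e0; exists y; split => //; apply: hB.
by rewrite -ball_normE.
Qed.

Lemma closed_normP (D : set V) (z : V) : closed D ->
  (forall e : R, 0 < e -> exists y, D y /\ `|z - y| < e) -> D z.
Proof.
move=> /closure_id cl H; rewrite cl; apply: normP_closure => e e0.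
by have [y [Dy hy]] := H e e0; exists y; split => //; rewrite -cl.
Qed.

Lemma step (D : set V) (Y Z : V) (Uv : {vspace V}) : cvx D -> closed D -> D Y ->
  (forall u, u \in Uv <-> Lset D Y u) -> Z \in Uv ->
  (exists M : R, forall t, 0 <= t -> D (Y + t *: Z) -> t <= M) ->
  exists ts : R, [/\ 0 <= ts, D (Y + ts *: Z) & exists Uv' : {vspace V},
    (forall u, u \in Uv' <-> Lset D (Y + ts *: Z) u) /\ (\dim Uv' < \dim Uv)%N].
Proof.
move=> cD clD DY hU hZ [M hM].
pose T := [set t : R | 0 <= t /\ D (Y + t *: Z)].
have T0 : T 0 by split => //; rewrite scale0r addr0.
have hsup : has_sup T by split; [exists 0 | exists M => t [t0 Dt]; exact: hM].
pose ts := sup T.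
have [e e0 [hp hm]] := (hU Z).1 hZ.
have Te : T e by split => //; exact: ltW.
have ets : e <= ts := sup_upper_bound hsup Te.
have ts0 : 0 < ts := lt_le_trans e0 ets.
have DY' : D (Y + ts *: Z).
  apply: closed_normP => // eps eps0.
  have nZ1 : 0 < `|Z| + 1 by rewrite ltr_pwDr.
  have eps'0 : 0 < eps / (`|Z| + 1) by rewrite divr_gt0.
  have [t [t0 Dt] htl] := sup_adherent eps'0 hsup.
  have tts : t <= ts := sup_upper_bound hsup (conj t0 Dt).
  exists (Y + t *: Z); split => //.
  have -> : Y + ts *: Z - (Y + t *: Z) = (ts - t) *: Z by vec.
  rewrite normrZ ger0_norm ?subr_ge0 //.
  apply: (le_lt_trans (y := (ts - t) * (`|Z| + 1))).
    by rewrite ler_wpM2l ?subr_ge0 // lerDl.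
  rewrite -(divfK (negbT (gt_eqF nZ1)) eps) ltr_pM2r //.
  by rewrite ltrBlDr addrC -ltrBlDr.
have [Uv' hU'] := Lset_vspace cD DY'.
have sub : forall u, Lset D (Y + ts *: Z) u -> Lset D Y u.
  move=> u [eu eu0 [up um]].
  have hc : D (Y + (e / ts) *: (Y - (Y + ts *: Z))).
    have E : Y + (e / ts) *: (Y - (Y + ts *: Z)) = Y - e *: Z.
      apply/matrixP => ? ?; rewrite !mxE; field.
      exact: (lt0r_neq0 ts0).
    by rewrite E.
  have ed0 : 0 <= e / ts by rewrite divr_ge0 // ltW.
  have h1 := combP (w := eu *: u) cD DY' hc ed0 up.
  have h2 := combP (w := eu *: - u) cD DY' hc ed0.
  rewrite scalerN in h2; have {}h2 := h2 um.
  exists (e / ts / (1 + e / ts) * eu).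
    have q0 : 0 < e / ts by exact: divr_gt0.
    by apply: mulr_gt0 => //; apply: divr_gt0 => //; apply: addr_gt0.
  by rewrite -(scalerA (e / ts / (1 + e / ts)) eu u); split => //; rewrite scalerN in h2.
exists ts; split => //; first exact: ltW.
exists Uv'; split => //.
have hsub : (Uv' <= Uv)%VS by apply/subvP => u /hU' /sub /hU.
have nZ : Z \notin Uv'.
  apply/negP => /hU' [e2 e20 [h _]].
  have : T (ts + e2).
    split; first by rewrite addr_ge0 // ltW.
    by have -> : Y + (ts + e2) *: Z = Y + ts *: Z + e2 *: Z by vec.
  move=> /(sup_upper_bound hsup); rewrite gerDl leNgt e20 //.
rewrite ltnNge; apply/negP => hle.
have /eqP E : Uv' == Uv by rewrite eqEdim hsub hle.
by move: nZ; rewrite E hZ.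
Qed.


Definition nolineP (D : set V) :=
  forall (x Z : V), Z != 0 -> ~ (forall t : R, D (x + t *: Z)).

Lemma unbounded_ray (D : set V) (Y Z : V) : cvx D -> D Y ->
  ~ (exists M : R, forall t, 0 <= t -> D (Y + t *: Z) -> t <= M) ->
  forall t : R, 0 <= t -> D (Y + t *: Z).
Proof.
move=> cD DY nb t t0; apply: contrapT => nD; apply: nb; exists t => t' t'0 Dt'.
rewrite leNgt; apply/negP => tt'; apply: nD.
by apply: (seg cD DY Dt'); rewrite t0 ltW.
Qed.

Lemma WpD s (X Y : V) : Wp s X -> Wp s Y -> Wp s (X + Y).
Proof. by move=> hX hY B hB; rewrite mxipDr hX ?hY ?addr0. Qed.
Lemma WpZ s (X : V) k : Wp s X -> Wp s (k *: X).
Proof. by move=> hX B hB; rewrite mxipZr hX ?mulr0. Qed.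
Lemma Wp0 s : Wp s (0 : V).
Proof. by move=> B _; rewrite mxip0r. Qed.

Lemma descent (D : set V) (s : seq V) (G0 : V) (r : nat) :
  cvx D -> closed D -> nolineP D -> (size s <= r)%N ->
  forall Y, D Y ->
  (exists Y' (Uv : {vspace V}), [/\ D Y', Wp s (Y' - Y), mxip G0 Y' <= mxip G0 Y,
       (forall u, u \in Uv <-> Lset D Y' u) & (\dim Uv <= r)%N])
  \/ (exists Y1 Z, [/\ D Y1, Wp s Z, mxip G0 Z < 0 &
       forall t, 0 <= t -> D (Y1 + t *: Z)]).
Proof.
move=> cD clD nl hs Y DY.
have [Uv hU] := Lset_vspace cD DY.
move: {2}(\dim Uv) (leqnn (\dim Uv)) => d.
elim: d Y DY Uv hU => [|d IH] Y DY Uv hU hd.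
  left; exists Y, Uv; split => //; first by rewrite subrr; exact: Wp0.
  exact: leq_trans hd _.
have [hr|hr] := leqP (\dim Uv) r.
  by left; exists Y, Uv; split => //; rewrite subrr; exact: Wp0.
have [Z0 [hZ0 [nZ0 WZ0]]] := kernel_ex (leq_ltn_trans hs hr).
have key : forall Z, Z \in Uv -> Wp s Z -> mxip G0 Z <= 0 ->
    (exists M : R, forall t, 0 <= t -> D (Y + t *: Z) -> t <= M) ->
  (exists Y' (Uv : {vspace V}), [/\ D Y', Wp s (Y' - Y), mxip G0 Y' <= mxip G0 Y,
       (forall u, u \in Uv <-> Lset D Y' u) & (\dim Uv <= r)%N])
  \/ (exists Y1 Z, [/\ D Y1, Wp s Z, mxip G0 Z < 0 &
       forall t, 0 <= t -> D (Y1 + t *: Z)]).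
  move=> Z hZ WZ gZ bd.
  have [ts [ts0 DY' [Uv' [hU' hlt]]]] := step cD clD DY hU hZ bd.
  have := IH _ DY' Uv' hU' ltac:(lia).
  case=> [[Y'' [Uv'' [DY'' W'' g'' hU'' hd'']]]|alt]; last by right.
  left; exists Y'', Uv''; split => //.
    have -> : Y'' - Y = (Y'' - (Y + ts *: Z)) + ts *: Z by vec.
    by apply: WpD => //; exact: WpZ.
  apply: (le_trans g''); rewrite mxipDr mxipZr gerDl.
  by rewrite mulr_ge0_le0.
have gen : forall Z, Z != 0 -> Z \in Uv -> Wp s Z -> mxip G0 Z <= 0 ->
  (exists Y' (Uv : {vspace V}), [/\ D Y', Wp s (Y' - Y), mxip G0 Y' <= mxip G0 Y,
       (forall u, u \in Uv <-> Lset D Y' u) & (\dim Uv <= r)%N])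
  \/ (exists Y1 Z, [/\ D Y1, Wp s Z, mxip G0 Z < 0 &
       forall t, 0 <= t -> D (Y1 + t *: Z)]).
  move=> Z nZ hZ WZ gZ.
  case: (pselect (exists M : R, forall t, 0 <= t -> D (Y + t *: Z) -> t <= M)).
    exact: key.
  move=> /(unbounded_ray cD DY) ray.
  have [gZn|gZ0] := ltP (mxip G0 Z) 0.
    by right; exists Y, Z; split.
  have gZe : mxip G0 Z = 0 by apply/eqP; rewrite eq_le gZ gZ0.
  case: (pselect (exists M : R, forall t, 0 <= t -> D (Y + t *: - Z) -> t <= M)).
    apply: key; first by rewrite memvN.
      by rewrite -scaleN1r; exact: WpZ.
    by rewrite mxipNr gZe oppr0.
  move=> /(unbounded_ray cD DY) ray'.
  exfalso; apply: (nl Y Z nZ) => t.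
  have [t0|t0] := leP 0 t; first exact: ray.
  have -> : Y + t *: Z = Y + (- t) *: - Z by rewrite scalerN scaleNr opprK.
  by apply: ray'; rewrite oppr_ge0 ltW.
have [g0|g0] := leP (mxip G0 Z0) 0; first exact: (gen Z0 nZ0 hZ0 WZ0 g0).
apply: (gen (- Z0)).
- by rewrite oppr_eq0.
- by rewrite memvN.
- by rewrite -scaleN1r; exact: WpZ.
- by rewrite mxipNr oppr_le0 ltW.
Qed.


Lemma conv_hull_cvx (X : set V) : cvx (conv_hull X).
Proof.
move=> x z l [q1 [w1 [y1 [w1p [w1s [y1X ->]]]]]] [q2 [w2 [y2 [w2p [w2s [y2X ->]]]]]].
move=> /andP [l0 l1].
pose pick (k : 'I_(q1 + q2)) := match fintype.split k with
  | inl i => ((1 - l) * w1 i, y1 i) | inr j => (l * w2 j, y2 j) end.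
have sl : forall i, fintype.split (lshift q2 i) = inl i := fun i => unsplitK (inl _ i).
have sr : forall j, fintype.split (rshift q1 j) = inr j := fun j => unsplitK (inr _ j).
have l0' : 0 <= 1 - l by rewrite subr_ge0.
exists (q1 + q2), (fun k => (pick k).1), (fun k => (pick k).2); split.
  by move=> k; rewrite /pick; case: fintype.split => i /=; apply: mulr_ge0.
split.
  rewrite big_split_ord.
  have -> : \sum_(i < q1) (pick (lshift q2 i)).1 = \sum_(i < q1) (1 - l) * w1 i.
    by apply: eq_bigr => i _; rewrite /pick sl.
  have -> : \sum_(i < q2) (pick (rshift q1 i)).1 = \sum_(i < q2) l * w2 i.
    by apply: eq_bigr => i _; rewrite /pick sr.
  rewrite -!mulr_sumr w1s w2s.
  have E : (1 - l) * 1 + l * 1 = 1 by lra.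
  exact: E.
split; first by move=> k; rewrite /pick; case: fintype.split => i /=.
rewrite big_split_ord.
have -> : \sum_(i < q1) (pick (lshift q2 i)).1 *: (pick (lshift q2 i)).2 =
  \sum_(i < q1) ((1 - l) * w1 i) *: y1 i.
  by apply: eq_bigr => i _; rewrite /pick sl.
have -> : \sum_(i < q2) (pick (rshift q1 i)).1 *: (pick (rshift q1 i)).2 =
  \sum_(i < q2) (l * w2 i) *: y2 i.
  by apply: eq_bigr => i _; rewrite /pick sr.
by rewrite !scaler_sumr; congr (_ + _); apply: eq_bigr => i _; rewrite scalerA.
Qed.

Lemma closure_cvx (C : set V) : cvx C -> cvx (closure C).
Proof.
move=> cC x y l hx hy hl; apply: normP_closure => e e0.
have e20 : 0 < e / 2 by rewrite divr_gt0.
have [x' [Cx' hx']] := closure_normP hx e20.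
have [y' [Cy' hy']] := closure_normP hy e20.
exists ((1 - l) *: x' + l *: y'); split; first exact: cC.
have -> : (1 - l) *: x + l *: y - ((1 - l) *: x' + l *: y') =
  (1 - l) *: (x - x') + l *: (y - y') by vec.
case/andP: hl => l0 l1.
apply: (le_lt_trans (ler_normD _ _)); rewrite !normrZ !ger0_norm ?subr_ge0 //.
have a0 : 0 <= `|x - x'| by [].
have b0 : 0 <= `|y - y'| by [].
have ee : e / 2 < e by rewrite ltr_pdivrMr // ltr_pMr // ltr1n.
nra.
Qed.

Lemma ray_rec (D : set V) (Y1 Z : V) : cvx D -> closed D -> D Y1 ->
  (forall t : R, 0 <= t -> D (Y1 + t *: Z)) -> rec_cone D Z.
Proof.
move=> cD clD DY1 ray x Dx t t0; apply: closed_normP => // e e0.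
set N := `|Y1 - x|.
have N0 : 0 <= N by exact: normr_ge0.
have Ne0 : 0 < N + e by rewrite ltr_wpDl.
pose lam := e / (N + e).
have lam0 : 0 < lam by rewrite divr_gt0.
have lam1 : lam <= 1 by rewrite ler_pdivrMr // mul1r lerDr.
exists ((1 - lam) *: x + lam *: (Y1 + (t / lam) *: Z)); split.
  by apply: cD => //; [apply: ray; rewrite divr_ge0 // ltW | rewrite (ltW lam0)].
have -> : x + t *: Z - ((1 - lam) *: x + lam *: (Y1 + t / lam *: Z)) =
    (- lam) *: (Y1 - x).
  apply/matrixP => ? ?; rewrite !mxE; field; exact: lt0r_neq0.
rewrite normrZ normrN gtr0_norm // -/N /lam.
rewrite mulrAC ltr_pdivrMr // mulrDr ltrDl; exact: mulr_gt0.
Qed.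

Lemma rec_cvx (D : set V) : cvx D -> cvx (rec_cone D).
Proof.
move=> cD d1 d2 l h1 h2 hl x Dx t t0.
have -> : x + t *: ((1 - l) *: d1 + l *: d2) =
  (1 - l) *: (x + t *: d1) + l *: (x + t *: d2) by vec.
by apply: cD => //; [exact: h1 | exact: h2].
Qed.

Lemma rec_closed (D : set V) : closed D -> closed (rec_cone D).
Proof.
move=> clD; apply/closure_id; apply/seteqP; split; first exact: subset_closure.
move=> d hd x Dx t t0; apply: closed_normP => // e e0.
have t1 : 0 < t + 1 by rewrite ltr_wpDl.
have [d' [Kd' hd']] := closure_normP hd (divr_gt0 e0 t1).
exists (x + t *: d'); split; first exact: Kd'.
have -> : x + t *: d - (x + t *: d') = t *: (d - d') by vec.
rewrite normrZ ger0_norm //.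
move: hd'; rewrite ltr_pdivlMr // => hd'.
have a0 : 0 <= `|d - d'| by [].
nra.
Qed.

Lemma rec0 (D : set V) : rec_cone D 0.
Proof. by move=> x Dx t _; rewrite scaler0 addr0. Qed.

Lemma recZ (D : set V) (d : V) (k : R) : 0 <= k -> rec_cone D d -> rec_cone D (k *: d).
Proof.
move=> k0 hd x Dx t t0; rewrite scalerA; apply: hd => //; exact: mulr_ge0.
Qed.

Lemma rec_noline (D : set V) (x0 : V) : D x0 -> nolineP D -> nolineP (rec_cone D).
Proof.
move=> Dx0 nl x Z nZ hK; apply: (nl (x0 + x) Z nZ) => t.
have := hK t x0 Dx0 1 ler01; rewrite scale1r.
by rewrite addrA.
Qed.


Lemma face0 (D : set V) (x0 : V) : D x0 -> nolineP D -> cvx D ->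
  is_face (rec_cone D) [set (0 : V)] /\ (aff_dim [set (0%R : V)] <= 0)%N.
Proof.
move=> Dx0 nl cD; split; last first.
  rewrite /aff_dim; case: ex_minnP => m _ hmin; apply: hmin.
  by apply/asboolP; exists [::]; split => // x y -> ->; rewrite subrr mem0v.
split; first by move=> _ ->; exact: rec0.
split.
  move=> x y lam; rewrite !in_setE => -> ->.
  by change (lam%:num *: (0 : V) + (1 - lam%:num) *: (0 : V) = 0); rewrite !scaler0 addr0.
move=> a b Ka Kb [l [/andP [l0 l1] h]] l' _.
move/eqP: h; rewrite addr_eq0 => /eqP h.
have hb : (l^-1 * (1 - l)) *: a = - b.
  rewrite -scalerA h scalerN scalerA mulVf ?scale1r //.
  exact: lt0r_neq0.
have Knb : rec_cone D (- b).
  rewrite -hb; apply: recZ => //; apply: mulr_ge0; rewrite ?invr_ge0 ?subr_ge0 ltW //.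
have b0 : b = 0.
  case: (eqVneq b 0) => // nb; exfalso; apply: (nl x0 b nb) => t.
  have [t0|t0] := leP 0 t; first exact: Kb.
  have -> : x0 + t *: b = x0 + (- t) *: - b by rewrite scalerN scaleNr opprK.
  by apply: Knb => //; rewrite oppr_ge0 ltW.
have a0 : a = 0.
  move: h; rewrite b0 scaler0 oppr0 => /eqP; rewrite scaler_eq0 => /orP [|/eqP //].
  by rewrite subr_eq0 => /eqP l1'; move: l1; rewrite -l1' ltxx.
by rewrite /= a0 b0 !scaler0 addr0.
Qed.

End Main.

Unset Implicit Arguments.
Theorem theorem6 (R : realType) (kd : qkind) (n p k t : nat)
  (F : 'I_t -> 'M[R]_(n, p) -> R) (m mt : nat) :
  (0 < k)%N -> (k <= n)%N -> (n <= p)%N ->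
  (forall j, {within Qset kd n p, continuous (F j)}) ->
  let X := domain_set kd k F in
  X !=set0 -> closed X -> no_line (clconv X) -> (mt <= m)%N ->
  (forall Fa Fb : set 'M[R]_(n, p),
     is_face (clconv X) Fa -> (aff_dim Fa <= mt)%N ->
     is_face (rec_cone (clconv X)) Fb -> (aff_dim Fb <= mt.+1)%N ->
     mink_sum Fa Fb `<=` X) ->
  forall (A0 : 'M[R]_(n, p)) (A : 'I_m -> 'M[R]_(n, p)) (bl bu : 'I_m -> \bar R),
    (forall i, (bl i <= bu i)%E) ->
    lmi_dim A = mt ->
    lin_inf A0 (lmi_feas X A bl bu) = lin_inf A0 (lmi_feas (clconv X) A bl bu).
Proof.
move=> k0 kn np Fc X [x0 Xx0] Xcl nlX mtm hface A0 A bl bu blu hdim.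
set D := clconv X.
have cD : cvx D by apply: closure_cvx; exact: conv_hull_cvx.
have clD : closed D by exact: closed_closure.
have XD : X `<=` D.
  move=> x Xx; apply: subset_closure.
  exists 1%N, (fun _ => 1), (fun _ => x); split => //; split; first by rewrite big_ord1.
  by split => //; rewrite big_ord1 scale1r.
have nlD : nolineP D by move=> x Z nZ h; apply: nlX; exists x, Z; split.
have Dx0 : D x0 by exact: XD.
set K := rec_cone D.
have cK : cvx K by exact: rec_cvx.
have clK : closed K by exact: rec_closed.
have nlK : nolineP K by exact: (rec_noline Dx0 nlD).
have [f0 af0] := face0 Dx0 nlD cD.
pose sb := (vbasis (span [seq A i | i <- enum 'I_m]) : seq _).
have hsb : size sb = mt by rewrite size_tuple -hdim.
have WA : forall Z, Wp sb Z -> forall i, mxip (A i) Z = 0.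
  move=> Z hW i; apply: (Wp_span hW).
  rewrite /sb (span_basis (vbasisP _)); apply: memv_span.
  by apply: map_f; rewrite mem_enum.
have feas : forall Y Y', lmi_feas D A bl bu Y -> Wp sb (Y' - Y) ->
    forall i, mxip (A i) Y' = mxip (A i) Y.
  move=> Y Y' _ hW i.
  have -> : Y' = Y + (Y' - Y) by rewrite addrC subrK.
  by rewrite mxipDr (WA _ hW) addr0.
rewrite /lin_inf; apply/eqP; rewrite eq_le; apply/andP; split; last first.
  apply: le_ereal_inf => _ [Y [XY hY] <-]; exists Y => //; split => //; exact: XD.
apply: le_ereal_inf_tmp => _ [Y [DY hY] <-].
have fY : lmi_feas D A bl bu Y by split.
case: (descent A0 cD clD nlD (eq_leq hsb) DY).
  move=> [Y' [Uv [DY' WY' gY' hU' hd']]].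
  have [fa afa] := face_lemma cD DY' hU'.
  have XY' : X Y'.
    apply: (hface _ [set 0] fa (leq_trans afa hd') f0 (leq_trans af0 (leq0n _))).
    exists Y'; first by split => //; rewrite subrr mem0v.
    by exists 0 => //; rewrite addr0.
  apply: (le_trans (ereal_inf_lbound _)); first exists Y'.
      split => // i; rewrite (feas Y Y' fY WY'); exact: hY.
    by [].
  by rewrite lee_fin.
move=> [Y1 [Z [DY1 WZ gZ ray]]].
have KZ : K Z by exact: (ray_rec cD clD DY1 ray).
have hsb' : (size (A0 :: sb) <= mt.+1)%N by rewrite /= hsb.
case: (descent 0 cK clK nlK hsb' KZ); last first.
  by move=> [? [Z1 [_ _ ]]]; rewrite mxip0l ltxx.
move=> [Z' [Uvk [KZ' WZ' _ hUk hdk]]].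
have WZ's : Wp sb Z'.
  have -> : Z' = (Z' - Z) + Z by rewrite subrK.
  by apply: WpD => // B hB; apply: (WZ' B); rewrite inE hB orbT.
have gZ' : mxip A0 Z' < 0.
  have -> : Z' = (Z' - Z) + Z by rewrite subrK.
  by rewrite mxipDr WZ' ?inE ?eqxx // add0r.
case: (descent 0 cD clD nlD (eq_leq hsb) DY); last first.
  by move=> [? [Z1 [_ _ ]]]; rewrite mxip0l ltxx.
move=> [Y'' [Uv [DY'' WY'' _ hU'' hd'']]].
have [fa afa] := face_lemma cD DY'' hU''.
have [fb afb] := face_lemma cK KZ' hUk.
have hsub := hface _ _ fa (leq_trans afa hd'') fb (leq_trans afb hdk).
have Z'in : Z' \in Uvk.
  apply/hUk; exists (1 / 2); first by rewrite divr_gt0.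
  split.
    have -> : Z' + 1 / 2 *: Z' = (1 + 1 / 2) *: Z' by rewrite scalerDl scale1r.
    apply: recZ => //; by rewrite addr_ge0 // divr_ge0.
  have -> : Z' - 1 / 2 *: Z' = (1 - 1 / 2) *: Z' by rewrite scalerBl scale1r.
  apply: recZ => //; rewrite subr_ge0 ler_pdivrMr // mul1r ler1n //.
pose gY := mxip A0 Y; pose gY'' := mxip A0 Y''; pose gz := mxip A0 Z'.
pose s := Num.max 0 ((gY'' - gY) / (- gz)).
have s0 : 0 <= s by rewrite le_max lexx.
have gz0 : 0 < - gz by rewrite oppr_gt0.
have hs : (gY'' - gY) <= s * (- gz).
  by rewrite -ler_pdivrMr // le_max lexx orbT.
have XP : X (Y'' + s *: Z').
  apply: hsub; exists Y''; first by split => //; rewrite subrr mem0v.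
  exists (s *: Z') => //; split; first exact: recZ.
  have -> : s *: Z' - Z' = (s - 1) *: Z' by rewrite scalerBl scale1r.
  exact: memvZ.
apply: (le_trans (ereal_inf_lbound _)); first exists (Y'' + s *: Z').
    split => // i; rewrite mxipDr mxipZr (WA _ WZ's) mulr0 addr0.
    rewrite (feas Y Y'' fY WY''); exact: hY.
  by [].
rewrite lee_fin mxipDr mxipZr -/gY'' -/gz -/gY.
move: hs; rewrite mulrN; lra.
Qed.
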